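(* Let $n,s,t$ be integers with $n/2>s>t\ge 2$, and suppose that $(t-1)\,f(n/2,s,t)\ge s$. Then there is no graph on $n$ vertices in which every induced subgraph on $s$ vertices contains both a clique of size $t$ and an independent set of size $t$.
   Context: For integers $N>s>t$, $f(N,s,t)$ denotes the largest integer $f$ such that every graph on $N$ vertices in which every induced subgraph on $s$ vertices has an independent set of size at least $t$ must contain an independent set of size at least $f$. (Floors are ignored, so $n/2$ is treated as an integer.) *)

(* Defs.v *)
From mathcomp Require Import all_boot.
Set Implicit Arguments. Unset Strict Implicit. Unset Printing Implicit Defensive.

Section Graphs.
Variable T : finType.

Definition simple_graph (e : rel T) : bool :=
  [forall x, ~~ e x x] && [forall x, forall y, e x y == e y x].

Definition independent (e : rel T) (A : {set T}) : bool :=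
  [forall x in A, forall y in A, ~~ e x y].

Definition clique (e : rel T) (A : {set T}) : bool :=
  [forall x in A, forall y in A, (x != y) ==> e x y].

Definition has_indep_in (e : rel T) (S : {set T}) (k : nat) : bool :=
  [exists A : {set T}, [&& A \subset S, independent e A & k <= #|A|]].

Definition has_clique_in (e : rel T) (S : {set T}) (k : nat) : bool :=
  [exists A : {set T}, [&& A \subset S, clique e A & k <= #|A|]].

Definition every_s_has_indep (e : rel T) (s t : nat) : bool :=
  [forall S : {set T}, (#|S| == s) ==> has_indep_in e S t].

End Graphs.

Definition adj_of N (g : {ffun 'I_N * 'I_N -> bool}) : rel 'I_N :=
  fun x y => g (x, y).

Definition f_ok (N s t k : nat) : bool :=
  [forall g : {ffun 'I_N * 'I_N -> bool},
     (simple_graph (adj_of g) && every_s_has_indep (adj_of g) s t)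
       ==> has_indep_in (adj_of g) [set: 'I_N] k].

(* f(N,s,t) = the largest such k (always <= N, since the empty graph
   qualifies; so the search range 0..N+1 is exhaustive) *)
Definition f (N s t : nat) : nat := \max_(k < N.+2 | f_ok N s t k) k.

(* Main.v *)
Require Import Defs.
From mathcomp Require Import all_boot.
From mathcomp Require Import zify.

Section Aux.
Variable T : finType.
Implicit Types (e : rel T) (A B : {set T}).

Lemma cliqueP e A : reflect (forall x y, x \in A -> y \in A -> x != y -> e x y) (clique e A).
Proof.
apply: (iffP forallP) => [H x y xA yA nxy | H x].
  by move: (H x) => /implyP /(_ xA) /forallP /(_ y) /implyP /(_ yA) /implyP; apply.
apply/implyP => xA; apply/forallP => y; apply/implyP => yA; apply/implyP; exact: H.
Qed.

Lemma indepP e A : reflect (forall x y, x \in A -> y \in A -> ~~ e x y) (independent e A).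
Proof.
apply: (iffP forallP) => [H x y xA yA | H x].
  by move: (H x) => /implyP /(_ xA) /forallP /(_ y) /implyP /(_ yA).
apply/implyP => xA; apply/forallP => y; apply/implyP => yA; exact: H.
Qed.

Lemma sub_card_exists A k : k <= #|A| -> exists B, B \subset A /\ #|B| = k.
Proof.
elim: k => [|k IH] hk; first by exists set0; rewrite sub0set cards0.
have [B [BA cB]] := IH (ltnW hk).
have : 0 < #|A :\: B| by rewrite cardsD (setIidPr BA) cB subn_gt0.
case/card_gt0P => x; rewrite in_setD => /andP [xnB xA].
exists (x |: B); split; first by rewrite subUset sub1set xA BA.
by rewrite cardsU1 xnB cB.
Qed.

Lemma clique_indep_le1 e A B : clique e A -> independent e B -> #|A :&: B| <= 1.
Proof.
move=> /cliqueP cA /indepP iB; apply/card_le1_eqP => x y.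
rewrite !in_setI => /andP [xA xB] /andP [yA yB].
apply/eqP; apply/negPn/negP => nxy.
by move: (iB x y xB yB); rewrite (cA x y xA yA) // eq_sym.
Qed.

End Aux.

Lemma f_ok0 N s t : f_ok N s t 0.
Proof.
apply/forallP => g; apply/implyP => _; apply/existsP; exists set0.
rewrite sub0set leq0n andbT; apply/forallP => x; by rewrite in_set0.
Qed.

Lemma f_okf N s t : f_ok N s t (f N s t).
Proof.
rewrite /f.
have H : 0 < #|[pred k : 'I_N.+2 | f_ok N s t k]|.
  apply/card_gt0P; exists ord0; rewrite inE; exact: f_ok0.
case: (eq_bigmax_cond (fun k : 'I_N.+2 => nat_of_ord k) H) => i iA ->.
by move: iA; rewrite inE.
Qed.

Lemma transfer (T : finType) (e : rel T) N s t k (U : {set T}) :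
  simple_graph e ->
  (forall S : {set T}, #|S| = s -> has_indep_in e S t) ->
  #|U| = N -> f_ok N s t k ->
  exists I : {set T}, [/\ I \subset U, independent e I & k <= #|I|].
Proof.
move=> /andP [/forallP irr /forallP sym] Hs cU fk.
pose h (i : 'I_N) : T := enum_val (cast_ord (esym cU) i).
have hinj : injective h.
  by move=> i j /enum_val_inj /cast_ord_inj.
have hU i : h i \in U by exact: enum_valP.
pose g : {ffun 'I_N * 'I_N -> bool} := [ffun p => e (h p.1) (h p.2)].
have sg : simple_graph (adj_of g).
  apply/andP; split; apply/forallP => x.
    rewrite /adj_of ffunE /=; exact: irr.
  apply/forallP => y; rewrite /adj_of !ffunE /=; exact: (forallP (sym (h x)) (h y)).
have es : every_s_has_indep (adj_of g) s t.
  apply/forallP => S; apply/implyP => /eqP cS.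
  have := Hs (h @: S); rewrite card_imset // => /(_ cS) /existsP [A /and3P [AS iA tA]].
  apply/existsP; exists (h @^-1: A).
  have hA : h @: (h @^-1: A) = A.
    apply/setP => x; apply/idP/idP => [/imsetP [y]|xA]; first by rewrite inE => ? ->.
    have /imsetP [y yS xe] := subsetP AS x xA.
    by apply/imsetP; exists y => //; rewrite inE -xe.
  apply/and3P; split.
  - apply/subsetP => i; rewrite inE => /(subsetP AS) /imsetP [j jS /hinj ->] //.
  - apply/indepP => x y; rewrite !inE /adj_of ffunE /= => xA yA.
    by move/indepP: iA; apply.
  - by rewrite -(card_imset _ hinj) hA.
have := forallP fk g; rewrite sg es /= => /existsP [B /and3P [_ iB kB]].
exists (h @: B); split.
- by apply/subsetP => x /imsetP [i _ ->].
- apply/indepP => x y /imsetP [i iB' ->] /imsetP [j jB' ->].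
  by move/indepP: iB => /(_ i j iB' jB'); rewrite /adj_of ffunE.
- by rewrite card_imset.
Qed.

Lemma greedy (T : finType) (e : rel T) n s F :
  s < n./2 -> #|T| = n ->
  (forall U : {set T}, #|U| = n./2 ->
     exists I : {set T}, [/\ I \subset U, independent e I & F <= #|I|]) ->
  forall j, exists W : {set T}, minn s (j * F) <= #|W| /\
    (forall A : {set T}, A \subset W -> clique e A -> #|A| <= j).
Proof.
move=> sn cT HU; elim=> [|j [W [cW HW]]].
  exists set0; split; first by rewrite mul0n minn0.
  by move=> A; rewrite subset0 => /eqP -> _; rewrite cards0.
case: (leqP s #|W|) => sW.
  exists W; split; first by apply: leq_trans (geq_minl _ _) sW.
  by move=> A AW cA; apply: leq_trans (HW A AW cA) _.
have cC : n./2 <= #|~: W|.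
  have h := odd_double_half n; rewrite -addnn in h.
  have := cardsC W; have := leq_b1 (odd n); rewrite cT; lia.
have [U [UC cU]] := @sub_card_exists _ (~: W) _ cC.
have [I [IU iI FI]] := HU U cU.
have IC : I \subset ~: W := subset_trans IU UC.
have WI0 : W :&: I = set0.
  apply/setP => x; rewrite !inE; apply/negP => /andP [xW xI].
  by move: (subsetP IC x xI); rewrite inE xW.
exists (W :|: I); split.
  rewrite cardsU WI0 cards0 subn0 mulSn.
  move: cW; rewrite /minn; case: ifP; case: ifP; lia.
move=> A AWI cA.
have -> : A = (A :&: W) :|: (A :&: I) by rewrite -setIUr; apply/esym/setIidPl.
rewrite cardsU.
have h1 := HW (A :&: W) (subsetIr _ _) _.
have h2 := @clique_indep_le1 _ e A I cA iI.
have h3 : clique e (A :&: W).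
  apply/cliqueP => x y; rewrite !inE => /andP [xA _] /andP [yA _].
  by move/cliqueP: cA; apply.
have := h1 h3; lia.
Qed.

Theorem mainTheorem6 (n s t : nat) :
  2 <= t -> t < s -> s < n./2 ->
  s <= (t - 1) * f n./2 s t ->
  forall (T : finType) (e : rel T),
    #|T| = n -> simple_graph e ->
    ~ (forall S : {set T}, #|S| = s ->
         has_clique_in e S t /\ has_indep_in e S t).
Proof.
move=> ht hts hsn hf T e cT sg H.
have HU : forall U : {set T}, #|U| = n./2 ->
    exists I : {set T}, [/\ I \subset U, independent e I & f n./2 s t <= #|I|].
  move=> U cU; apply: (@transfer T e n./2 s t _ U sg _ cU (f_okf _ _ _)).
  by move=> S cS; case: (H S cS).
have [W [cW HW]] := @greedy T e n s _ hsn cT HU (t - 1).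
have sW : s <= #|W| by move: cW; rewrite /minn; case: ifP; lia.
have [S [SW cS]] := @sub_card_exists _ W _ sW.
case: (H S cS) => /existsP [A /and3P [AS cA tA]] _.
have := HW A (subset_trans AS SW) cA; lia.
Qed.
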